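(* There is no perfect lattice code in $\mathcal{A}(n,n-2,\ell)$ if $n\ge 4$ and $\ell\ge 2$.
   Context: For integers $n\ge 1$, $0\le t\le n$, $\ell\ge 1$, let $\mathcal{S}(n,t,\ell)=\{\mathcal{E}\in\mathbb{Z}^n: 0\le\varepsilon_i\le\ell \text{ for all } i,\ w_H(\mathcal{E})\le t\}$, where $w_H$ is the number of nonzero coordinates. A lattice here is the set of integer combinations of $n$ linearly independent vectors of $\mathbb{Z}^n$. $\mathcal{A}(n,t,\ell)$ is the set of lattices $\mathcal{L}\subseteq\mathbb{Z}^n$ such that the translates $X+\mathcal{S}(n,t,\ell)$, $X\in\mathcal{L}$, are pairwise disjoint. Such $\mathcal{L}$ is perfect if these translates also cover $\mathbb{Z}^n$. *)

(* Defs.v *)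
From HB Require Import structures.
From mathcomp Require Import all_boot all_order all_algebra.
Set Implicit Arguments. Unset Strict Implicit. Unset Printing Implicit Defensive.
Import Order.TTheory GRing.Theory Num.Theory.
Local Open Scope ring_scope.

Definition wH (n : nat) (e : 'rV[int]_n) : nat := #|[set i : 'I_n | e 0 i != 0]|.

Definition inS (n t : nat) (l : int) (e : 'rV[int]_n) : Prop :=
  (forall i : 'I_n, 0 <= e 0 i <= l) /\ (wH e <= t)%N.

(* B : 'M[int]_n has as rows n vectors of Z^n; they are linearly independent
   (over Q, equivalently over R) iff the rational image of B is row-free. *)
Definition lin_indep (n : nat) (B : 'M[int]_n) : Prop :=
  row_free (map_mx (fun z : int => z%:~R : rat) B).

Definition in_lattice (n : nat) (B : 'M[int]_n) (x : 'rV[int]_n) : Prop :=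
  exists c : 'rV[int]_n, x = c *m B.

Definition lattice_packing (n t : nat) (l : int) (B : 'M[int]_n) : Prop :=
  forall X Y e1 e2 : 'rV[int]_n,
    in_lattice B X -> in_lattice B Y -> inS t l e1 -> inS t l e2 ->
    X + e1 = Y + e2 -> X = Y.

Definition lattice_covering (n t : nat) (l : int) (B : 'M[int]_n) : Prop :=
  forall z : 'rV[int]_n, exists X e : 'rV[int]_n,
    in_lattice B X /\ inS t l e /\ z = X + e.

Definition perfect_lattice_code (n t : nat) (l : int) (B : 'M[int]_n) : Prop :=
  lin_indep B /\ lattice_packing t l B /\ lattice_covering t l B.

(* Main.v *)
Require Import Defs.
From mathcomp Require Import all_boot all_order all_algebra.
From mathcomp Require Import zify.
Import Order.TTheory GRing.Theory Num.Theory.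
Set Implicit Arguments. Unset Strict Implicit. Unset Printing Implicit Defensive.
Local Open Scope ring_scope.

Definition wv (n : nat) (k : 'I_n) (c : int) : 'rV[int]_n :=
  \row_(i < n) (if i == k then - c else 1).

Lemma wH_le (n : nat) (e : 'rV[int]_n) (A : {set 'I_n}) :
  (forall i, e 0 i != 0 -> i \in A) -> (wH e <= #|A|)%N.
Proof.
move=> H; rewrite /wH; apply: subset_leq_card; apply/subsetP => i.
by rewrite inE; exact: H.
Qed.

Lemma card_C2 (n : nat) (k m : 'I_n) : k != m -> #|~: [set k; m]| = (n - 2)%N.
Proof.
move=> km; have H := cardsC [set k; m]; rewrite cards2 km card_ord in H.
lia.
Qed.

Lemma card_C1 (n : nat) (k : 'I_n) : #|~: [set k]| = (n - 1)%N.
Proof.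
have H := cardsC [set k]; rewrite cards1 card_ord in H. lia.
Qed.

Lemma addE n (X Y : 'rV[int]_n) (i : 'I_n) : (X + Y) 0 i = (X 0 i + Y 0 i : int).
Proof. by rewrite mxE. Qed.
Lemma zeroE n (i : 'I_n) : (0 : 'rV[int]_n) 0 i = (0 : int).
Proof. by rewrite mxE. Qed.

Lemma lat0 (n : nat) (B : 'M[int]_n) : in_lattice B 0.
Proof. by exists 0; rewrite mul0mx. Qed.

Lemma latD (n : nat) (B : 'M[int]_n) X Y :
  in_lattice B X -> in_lattice B Y -> in_lattice B (X + Y).
Proof. by move=> [c ->] [d ->]; exists (c + d); rewrite mulmxDl. Qed.

Lemma factA (n : nat) (l : int) (B : 'M[int]_n) (k : 'I_n) :
  (4 <= n)%N -> 2 <= l ->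
  lattice_packing (n - 2) l B -> lattice_covering (n - 2) l B ->
  exists c : int, 0 <= c <= l /\ in_lattice B (wv k c).
Proof.
move=> Hn Hl Hp Hc.
have [X [e [HX [[He1 He2] Hz]]]] := Hc (wv k 0).
have key : forall m, m != k -> e 0 m = 0.
  move=> m mk; apply/eqP; apply/negPn/negP => em.
  pose a : 'rV[int]_n := \row_i (if 0 <= X 0 i then X 0 i else 0).
  pose b : 'rV[int]_n := \row_i (if 0 <= X 0 i then 0 else - X 0 i).
  have HXi : forall i, X 0 i = (if i == k then 0 else 1) - e 0 i.
    move=> i; have := congr1 (fun M : 'rV[int]_n => M 0 i) Hz.
    rewrite /= addE mxE; case: (i == k) => H; lia.
  have Hab : 0 + a = X + b.
    apply/rowP => i; rewrite !addE zeroE !mxE; case: ifP => h; lia.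
  have Ha : inS (n - 2) l a.
    split.
      move=> i; rewrite mxE; have := He1 i; rewrite HXi; case: (i == k); case: ifP => h; lia.
    apply: (@leq_trans #|~: [set k; m]|); last by rewrite card_C2 // eq_sym.
    apply: wH_le => i; rewrite mxE !inE negb_or.
    case: ifP => h; last by rewrite eqxx.
    move=> Hx; apply/andP; split; apply/negP => /eqP Ei; subst i.
    - have := HXi k; case: eqP => [_|/(_ erefl) []]; have := He1 k; lia.
    - have := HXi m; rewrite (negbTE mk); have := He1 m; move: em; lia.
  have Hb : inS (n - 2) l b.
    split.
      move=> i; rewrite mxE; have := He1 i; rewrite HXi; case: (i == k); case: ifP => h; lia.
    apply: leq_trans He2; rewrite /wH; apply: subset_leq_card; apply/subsetP => i.
    rewrite !inE mxE HXi; have := He1 i; case: (i == k); case: ifP => h; lia.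
  have X0 := Hp _ _ _ _ (lat0 B) HX Ha Hb Hab.
  move: He2; rewrite -X0 add0r in Hz; rewrite -Hz.
  rewrite /wH (_ : [set i | wv k 0 0 i != 0] = ~: [set k]).
    rewrite card_C1; lia.
  apply/setP => i; rewrite !inE mxE; by case: (i == k).
exists (e 0 k); split; first exact: He1.
rewrite (_ : wv k (e 0 k) = X) //; apply/rowP => i.
have := congr1 (fun M : 'rV[int]_n => M 0 i) Hz; rewrite /= addE !mxE.
case: (i =P k) => [->|ik].
  move=> /= H; lia.
move/eqP: ik => ik; rewrite /= key //; lia.
Qed.

Definition unitv (n : nat) (k : 'I_n) (a : int) : 'rV[int]_n :=
  \row_(i < n) (if i == k then a else 0).

Lemma inS_unit (n : nat) (l : int) (k : 'I_n) (a : int) :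
  (3 <= n)%N -> 0 <= a <= l -> inS (n - 2) l (unitv k a).
Proof.
move=> Hn Ha; split.
  move=> i; rewrite mxE; case: (i == k) => //; lia.
apply: (@leq_trans #|[set k]|); last by rewrite cards1; lia.
apply: wH_le => i; rewrite mxE inE; by case: (i == k); rewrite ?eqxx.
Qed.

Lemma caseA1 (n : nat) (l : int) (B : 'M[int]_n) (k m : 'I_n) (ck cm : int) :
  (4 <= n)%N -> lattice_packing (n - 2) l B -> k != m ->
  0 <= ck -> ck + 1 <= l -> 0 <= cm -> cm + 1 <= l ->
  in_lattice B (wv k ck) -> in_lattice B (wv m cm) -> False.
Proof.
move=> Hn Hp km h1 h2 h3 h4 Lk Lm.
have E : wv k ck + unitv k (ck + 1) = wv m cm + unitv m (cm + 1).
  apply/rowP => i; rewrite !addE !mxE.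
  case: (i =P k) => [Ei|ik]; case: (i =P m) => [Em|im] /=; try lia.
have := Hp _ _ _ _ Lk Lm (inS_unit _ _ _) (inS_unit _ _ _) E.
move=> /(_ ltac:(lia)) /(_ ltac:(lia)) /(_ ltac:(lia)) /(_ ltac:(lia)).
move=> /(congr1 (fun M : 'rV[int]_n => M 0 m)) /=; rewrite !mxE.
case: (m =P k) => [mk|_]; first by move: km; rewrite mk eqxx.
case: (m =P m) => // _; lia.
Qed.

Lemma caseA2 (n : nat) (l : int) (B : 'M[int]_n) (k m p : 'I_n) :
  (4 <= n)%N -> 2 <= l -> lattice_packing (n - 2) l B -> k != m ->
  p != k -> p != m ->
  in_lattice B (wv k l) -> in_lattice B (wv m l) -> False.
Proof.
move=> Hn Hl Hp km pk pm Lk Lm.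
pose a : 'rV[int]_n := \row_i (if (i == k) || (i == m) then 0 else 2).
pose b : 'rV[int]_n := \row_i (if (i == k) || (i == m) then l - 1 else 0).
have E : 0 + a = (wv k l + wv m l) + b.
  apply/rowP => i; rewrite !addE zeroE !mxE.
  (case: (i =P k) => [Ei|ik]; case: (i =P m) => [Em|im]);
    [move/eqP: km; congruence|rewrite /=; lia|rewrite /=; lia|rewrite /=; lia].
have Ha : inS (n - 2) l a.
  split.
    move=> i; rewrite mxE; case: (_ || _); lia.
  apply: (@leq_trans #|~: [set k; m]|); last by rewrite card_C2.
  apply: wH_le => i; rewrite mxE !inE; by case: (_ || _); rewrite ?eqxx.
have Hb : inS (n - 2) l b.
  split.
    move=> i; rewrite mxE; case: (_ || _); lia.
  apply: (@leq_trans #|[set k; m]|); last by rewrite cards2 km; lia.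
  apply: wH_le => i; rewrite mxE !inE; by case: (_ || _); rewrite ?eqxx.
have := Hp _ _ _ _ (lat0 B) (latD Lk Lm) Ha Hb E.
move=> /(congr1 (fun M : 'rV[int]_n => M 0 p)) /=; rewrite addE zeroE !mxE.
rewrite (negPf pk) (negPf pm); lia.
Qed.

Theorem mainTheorem7 (n : nat) (l : int) :
  (4 <= n)%N -> 2 <= l ->
  forall B : 'M[int]_n, ~ perfect_lattice_code (n - 2) l B.
Proof.
move=> Hn Hl B [_ [Hp Hc]].
have h0 : (0 < n)%N by lia.
have h1 : (1 < n)%N by lia.
have h2 : (2 < n)%N by lia.
pose i0 := Ordinal h0. pose i1 := Ordinal h1. pose i2 := Ordinal h2.
have d01 : i0 != i1 by [].
have d02 : i0 != i2 by [].
have d12 : i1 != i2 by [].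
have [c0 [r0 L0]] := factA i0 Hn Hl Hp Hc.
have [c1 [r1 L1]] := factA i1 Hn Hl Hp Hc.
have [c2 [r2 L2]] := factA i2 Hn Hl Hp Hc.
have ceq : forall c, 0 <= c <= l -> ~~ (c + 1 <= l) -> c = l by move=> c; lia.
have cge : forall c, 0 <= c <= l -> 0 <= c by move=> c; lia.
case: (boolP (c0 + 1 <= l)) => a0; case: (boolP (c1 + 1 <= l)) => a1;
  case: (boolP (c2 + 1 <= l)) => a2.
- exact: (caseA1 Hn Hp d01 (cge _ r0) a0 (cge _ r1) a1 L0 L1).
- exact: (caseA1 Hn Hp d01 (cge _ r0) a0 (cge _ r1) a1 L0 L1).
- exact: (caseA1 Hn Hp d02 (cge _ r0) a0 (cge _ r2) a2 L0 L2).
- rewrite (ceq _ r1 a1) in L1; rewrite (ceq _ r2 a2) in L2.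
  exact: (caseA2 Hn Hl Hp d12 (_ : i0 != i1) (_ : i0 != i2) L1 L2).
- exact: (caseA1 Hn Hp d12 (cge _ r1) a1 (cge _ r2) a2 L1 L2).
- rewrite (ceq _ r0 a0) in L0; rewrite (ceq _ r2 a2) in L2.
  exact: (caseA2 Hn Hl Hp d02 (_ : i1 != i0) (_ : i1 != i2) L0 L2).
- rewrite (ceq _ r0 a0) in L0; rewrite (ceq _ r1 a1) in L1.
  exact: (caseA2 Hn Hl Hp d01 (_ : i2 != i0) (_ : i2 != i1) L0 L1).
- rewrite (ceq _ r0 a0) in L0; rewrite (ceq _ r1 a1) in L1.
  exact: (caseA2 Hn Hl Hp d01 (_ : i2 != i0) (_ : i2 != i1) L0 L1).
Qed.
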